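(* Let $\Gamma$ be an Arf numerical semigroup with multiplicity $e$ and conductor $c$. Let $e'\in\Gamma\setminus\{0,e\}$, $\Gamma_{e'}=\{0\}\cup(e'+\Gamma)$ and $c'=c+e'$. Then \[ \delta^2_{\Gamma_{e'}}(c'+e'+k)=\delta^2_\Gamma(c+k)+3\quad\text{for all }k\in\mathbb N. \]
   Context: A numerical semigroup is a subset $\Gamma\subseteq\mathbb N$ containing $0$, closed under addition, with finite complement; write $\Gamma=\{0=\rho_1<\rho_2<\cdots\}$; multiplicity $e=\rho_2$; conductor = least $c$ with $c+\mathbb N\subseteq\Gamma$. $\Gamma$ is Arf if $\rho_i+\rho_j-\rho_k\in\Gamma$ for all $i\ge j\ge k$. For a numerical semigroup $S$: $D_S(x)=\{s\in S:x-s\in S\}$ and $\delta^2_S(m)=\min\{|D_S(m_1)\cup D_S(m_2)|: m\le m_1<m_2,\ m_i\in S\}$. *)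

(* Defs.v *)
From mathcomp Require Import all_boot.
Set Implicit Arguments. Unset Strict Implicit. Unset Printing Implicit Defensive.

Definition numerical_semigroup (S : pred nat) : Prop :=
  [/\ S 0,
      (forall x y, S x -> S y -> S (x + y)) &
      exists N, forall n, N <= n -> S n].

Definition is_multiplicity (S : pred nat) (e : nat) : Prop :=
  [/\ 0 < e, S e & forall s, S s -> 0 < s -> e <= s].

Definition is_conductor (S : pred nat) (c : nat) : Prop :=
  (forall n, c <= n -> S n) /\
  (forall c0, (forall n, c0 <= n -> S n) -> c <= c0).

Definition arf (S : pred nat) : Prop :=
  forall x y z, S x -> S y -> S z -> y <= x -> z <= y -> S (x + y - z).

Definition Dset (S : pred nat) (x : nat) : seq nat :=
  [seq s <- iota 0 x.+1 | S s && S (x - s)].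

Definition card_D_union (S : pred nat) (m1 m2 : nat) : nat :=
  size (undup (Dset S m1 ++ Dset S m2)).

Definition is_delta2 (S : pred nat) (m d : nat) : Prop :=
  (exists m1 m2, [/\ m <= m1, m1 < m2, S m1, S m2 & card_D_union S m1 m2 = d]) /\
  (forall m1 m2, m <= m1 -> m1 < m2 -> S m1 -> S m2 -> d <= card_D_union S m1 m2).

Definition shift_sg (S : pred nat) (e' : nat) : pred nat :=
  fun n => (n == 0) || ((e' <= n) && S (n - e')).

(* Main.v *)
Require Import Defs.
From mathcomp Require Import all_boot zify.

Definition inD (S : pred nat) (m s : nat) : bool := (s <= m) && S s && S (m - s).

Lemma mem_Dset S x s : (s \in Dset S x) = inD S x s.
Proof.
rewrite /Dset mem_filter mem_iota /inD add0n ltnS.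
by case: (s <= x); case: (S s); case: (S (x - s)).
Qed.

Lemma cardDE S a b N : a < N -> b < N ->
  card_D_union S a b = count (fun s => inD S a s || inD S b s) (iota 0 N).
Proof.
move=> ha hb; rewrite /card_D_union -size_filter; apply: perm_size.
apply: uniq_perm; first exact: undup_uniq.
  by apply: filter_uniq; apply: iota_uniq.
move=> s; rewrite mem_undup mem_cat !mem_Dset mem_filter mem_iota add0n.
case h: (inD S a s || inD S b s) => //=; symmetry.
move: h => /orP [] /andP [] /andP [] h1 _ _; apply/ltP; move/leP: h1; lia.
Qed.

Lemma count_or (p q : pred nat) s :
  count (fun x => p x || q x) s = count p s + count (fun x => q x && ~~ p x) s.
Proof.
elim: s => //= x s IH; rewrite IH; case: (p x); case: (q x) => /=; lia.
Qed.

Lemma count_eq_and (a : nat) (q : pred nat) s :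
  count (fun x => (x == a) && q x) s = count_mem a s * q a.
Proof.
elim: s => //= x s IH; rewrite IH; case: (eqVneq x a) => [->|] /=; lia.
Qed.

Lemma count_or1 (p : pred nat) a L : a < L ->
  count (fun x => p x || (x == a)) (iota 0 L) = count p (iota 0 L) + ~~ p a.
Proof.
move=> h; rewrite count_or count_eq_and count_uniq_mem ?iota_uniq //.
by rewrite mem_iota add0n h mul1n.
Qed.

Lemma count_zero_tail (p : pred nat) n k :
  (forall x, n <= x -> ~~ p x) -> count p (iota 0 (n + k)) = count p (iota 0 n).
Proof.
move=> h; rewrite iotaD count_cat add0n.
suff -> : count p (iota n k) = 0 by rewrite addn0.
apply/eqP; rewrite -leqn0 leqNgt -has_count; apply/hasPn => x.
rewrite mem_iota => /andP [] hx _; exact: h.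
Qed.

Lemma key (G : pred nat) e y1 y2 :
  G 0 -> (forall x y, G x -> G y -> G (x + y)) -> 0 < e -> G e ->
  G y2 -> y1 + e < y2 ->
  card_D_union G y1 (y2 - e) < card_D_union G y1 y2.
Proof.
move=> G0 Gadd e0 Ge Gy2 hy.
set M := (y2 - e).+1.
have hN : y2.+1 = e + M by rewrite /M; lia.
rewrite (@cardDE G y1 y2 (e + M)); try (rewrite /M; lia).
rewrite (@cardDE G y1 (y2 - e) M); try (rewrite /M; lia).
rewrite (count_or (inD G y1)) (count_or (inD G y1)) [in X in _ < X](addnC e M).
rewrite (@count_zero_tail (inD G y1) M e); last first.
  move=> x hx; apply/negP => /andP [] /andP [] h _ _; move: h; rewrite /M in hx; lia.
rewrite (addnC M e).
rewrite ltn_add2l.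
set q := (fun x => inD G y2 x && ~~ inD G y1 x).
set r := (fun x => inD G (y2 - e) x && ~~ inD G y1 x).
have rq : forall u, r u -> q (e + u).
  move=> u; rewrite /r /q /inD => /andP [] /andP [] /andP [] h1 h2 h3 h4.
  have -> : y2 - (e + u) = y2 - e - u by lia.
  rewrite h3 Gadd // andbT; apply/andP; split; first by apply/andP; split => //; lia.
  apply: contra h4 => /andP [] /andP [] h5 _ h6; rewrite h2 /=.
  have -> : y1 - u = (y1 - (e + u)) + e by lia.
  rewrite Gadd // andbT; lia.
have rq2 : forall u, r u -> q u.
  move=> u; rewrite /r /q /inD => /andP [] /andP [] /andP [] h1 h2 h3 ->.
  have -> : y2 - u = (y2 - e - u) + e by lia.
  rewrite h2 Gadd //; lia.
have ex : forall x, q x -> (exists2 x', x' < e & q x') \/ (exists2 u, u < M & q (e + u) && ~~ r u).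
  elim/ltn_ind => x IH qx.
  case: (ltnP x e) => hxe; first by left; exists x.
  have hx : x = e + (x - e) by lia.
  case rr: (r (x - e)).
    apply: (IH (x - e)); [lia | exact: rq2].
  right; exists (x - e).
    move: qx; rewrite /q /inD => /andP [] /andP [] /andP [] h _ _ _; rewrite /M; lia.
  by rewrite -hx qx rr.
have qy2 : q y2.
  rewrite /q /inD leqnn subnn Gy2 G0 /=; apply/negP => /andP [] /andP [] h _ _; lia.
rewrite iotaD count_cat.
have -> : iota (0 + e) M = map (addn e) (iota 0 M) by rewrite add0n -{1}(addn0 e) iotaDl.
rewrite count_map.
have -> : count (preim (addn e) q) (iota 0 M)
        = count r (iota 0 M) + count (fun x => q (e + x) && ~~ r x) (iota 0 M).
  rewrite -count_or; apply: eq_count => x /=.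
  by case rx: (r x) => //=; rewrite (rq _ rx).
case: (ex _ qy2) => [[x hx qx] | [u hu hqu]].
  have : 0 < count q (iota 0 e) by rewrite -has_count; apply/hasP; exists x => //; rewrite mem_iota; lia.
  lia.
have : 0 < count (fun x => q (e + x) && ~~ r x) (iota 0 M).
  by rewrite -has_count; apply/hasP; exists u => //; rewrite mem_iota; lia.
lia.
Qed.

Lemma inD_shift (G : pred nat) e' y u : 0 < e' -> G (y + e') ->
  inD (shift_sg G e') (y + e' + e') (e' + u) = inD G y u || (u == y + e').
Proof.
move=> he Gy; rewrite /inD /shift_sg addKn.
have -> : (e' + u == 0) = false by apply/negbTE; lia.
rewrite leq_addr /=.
case: (leqP u y) => h.
  have -> : y + e' + e' - (e' + u) - e' = y - u by lia.
  have -> : (y + e' + e' - (e' + u) == 0) = false by apply/negbTE; lia.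
  have -> : e' <= y + e' + e' - (e' + u) by lia.
  have -> : e' + u <= y + e' + e' by lia.
  have -> : (u == y + e') = false by apply/negbTE; lia.
  by rewrite /= orbF.
case: (ltngtP u (y + e')) => h2.
- have -> : (y + e' + e' - (e' + u) == 0) = false by apply/negbTE; lia.
  have -> : e' <= y + e' + e' - (e' + u) = false by apply/negbTE; lia.
  by rewrite !andbF.
- have -> : e' + u <= y + e' + e' = false by apply/negbTE; lia.
  by [].
- subst u; rewrite orbT Gy.
  have -> : y + e' + e' - (e' + (y + e')) = 0 by lia.
  have -> : e' + (y + e') <= y + e' + e' by lia.
  by [].
Qed.

Lemma shift_card (G : pred nat) e' y1 y2 : 0 < e' -> y1 < y2 ->
  G (y1 + e') -> G (y2 + e') ->
  card_D_union (shift_sg G e') (y1 + e' + e') (y2 + e' + e')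
  = card_D_union G y1 y2 + 2 + ~~ ((y1 + e' <= y2) && G (y2 - (y1 + e'))).
Proof.
move=> he hy G1 G2.
set L := y2 + e' + 1.
rewrite (@cardDE _ _ _ (e' + L)); try (rewrite /L; lia).
rewrite (@cardDE G y1 y2 L); try (rewrite /L; lia).
rewrite iotaD count_cat.
have -> : iota (0 + e') L = map (addn e') (iota 0 L) by rewrite add0n -{1}(addn0 e') iotaDl.
rewrite count_map.
have -> : count (preim (addn e')
      (fun s => inD (shift_sg G e') (y1 + e' + e') s || inD (shift_sg G e') (y2 + e' + e') s))
      (iota 0 L)
  = count (fun u => ((inD G y1 u || inD G y2 u) || (u == y1 + e')) || (u == y2 + e')) (iota 0 L).
  apply: eq_count => u /=; rewrite !inD_shift //.
  by case: (inD G y1 u); case: (inD G y2 u); case: (u == y1 + e'); case: (u == y2 + e').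
rewrite count_or1; last by rewrite /L; lia.
rewrite count_or1; last by rewrite /L; lia.
have -> : count (fun s => inD (shift_sg G e') (y1 + e' + e') s || inD (shift_sg G e') (y2 + e' + e') s) (iota 0 e') = 1.
  have he1 : e' = (e'.-1).+1 by lia.
  rewrite he1 /= -he1.
  have -> : inD (shift_sg G e') (y1 + e' + e') 0 = true.
    rewrite /inD /shift_sg /= subn0.
    have -> : e' <= y1 + e' + e' by lia.
    have -> : y1 + e' + e' - e' = y1 + e' by lia.
    by rewrite G1 orbT.
  rewrite /=.
  suff -> : count (fun s => inD (shift_sg G e') (y1 + e' + e') s || inD (shift_sg G e') (y2 + e' + e') s) (iota 1 e'.-1) = 0 by [].
  apply/eqP; rewrite -leqn0 leqNgt -has_count; apply/hasPn => x.
  rewrite mem_iota => /andP [] hx1 hx2.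
  rewrite /inD /shift_sg.
  have -> : (x == 0) = false by apply/negbTE; lia.
  have -> : (e' <= x) = false by apply/negbTE; lia.
  by rewrite !andbF.
have -> : inD G y2 (y2 + e') = false by rewrite /inD; apply/negbTE; apply/negP => /andP [] /andP [] h _ _; lia.
have -> : inD G y1 (y2 + e') = false by rewrite /inD; apply/negbTE; apply/negP => /andP [] /andP [] h _ _; lia.
have -> : (y2 + e' == y1 + e') = false by apply/negbTE; lia.
have -> : inD G y1 (y1 + e') = false by rewrite /inD; apply/negbTE; apply/negP => /andP [] /andP [] h _ _; lia.
rewrite /= /inD G1 /=.
lia.
Qed.

Theorem lemma4p13 (G : pred nat) (e c e' : nat) :
  numerical_semigroup G -> arf G ->
  is_multiplicity G e -> is_conductor G c ->
  G e' -> e' != 0 -> e' != e ->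
  forall k d : nat,
    is_delta2 G (c + k) d ->
    is_delta2 (shift_sg G e') ((c + e') + e' + k) (d + 3).
Proof.
move=> [G0 Gadd _] _ [e0 Ge emin] [Gc _] Ge' he'0 he'e k d [[m1 [m2 [h1 h2 hm1 hm2 hd]]] hmin].
have hee' : e < e'.
  have := emin e' Ge'; move: he'0 he'e; lia.
have he' : 0 < e' by lia.
(* minimal pairs have gap at most e *)
have strict : forall y1 y2, c + k <= y1 -> y1 + e < y2 -> G y1 -> G y2 ->
    d < card_D_union G y1 y2.
  move=> y1 y2 hk hy Gy1 Gy2.
  have := @key G e y1 y2 G0 Gadd e0 Ge Gy2 hy.
  have : G (y2 - e) by apply: Gc; lia.
  move=> G2e.
  have := hmin y1 (y2 - e) hk ltac:(lia) Gy1 G2e; lia.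
split.
  have hm : m2 <= m1 + e.
    case: (leqP m2 (m1 + e)) => // hc.
    have := strict _ _ h1 hc hm1 hm2; lia.
  exists (m1 + e' + e'), (m2 + e' + e'); split; try lia.
  - rewrite /shift_sg; apply/orP; right; apply/andP; split; first lia.
    apply: Gc; lia.
  - rewrite /shift_sg; apply/orP; right; apply/andP; split; first lia.
    apply: Gc; lia.
  - rewrite shift_card //; try (apply: Gc; lia).
    have -> : (m1 + e' <= m2) = false by apply/negbTE; lia.
    by rewrite hd /=; lia.
move=> M1 M2 hM1 hM12 _ _.
have -> : M1 = (M1 - e' - e') + e' + e' by lia.
have -> : M2 = (M2 - e' - e') + e' + e' by lia.
set y1 := M1 - e' - e'; set y2 := M2 - e' - e'.
have hy1 : c + k <= y1 by rewrite /y1; lia.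
have hy12 : y1 < y2 by rewrite /y1 /y2; lia.
have Gy1 : G y1 by apply: Gc; lia.
have Gy2 : G y2 by apply: Gc; lia.
rewrite shift_card //; try (apply: Gc; lia).
case hb: ((y1 + e' <= y2) && G (y2 - (y1 + e'))) => /=.
  move: hb => /andP [] hb _.
  have hlt : y1 + e < y2 by lia.
  have := strict _ _ hy1 hlt Gy1 Gy2; lia.
have := hmin _ _ hy1 hy12 Gy1 Gy2; lia.
Qed.
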